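(* Let $\mathcal{R}$ be a finite valuation ring of order $q^r$, where $q$ is a power of an odd prime, and let $\mathcal{A}\subset\mathcal{R}$ with $|\mathcal{A}|\ge 2q^{r-1}$. For all constants $c_1,c_2>0$ there is a constant $C>0$ depending only on $c_1,c_2$ such that: (1) if $|\mathcal{A}|\ge c_1 q^{r-\frac13}$, then $\max\{|\mathcal{A}+\mathcal{A}|, |\mathcal{A}^2+\mathcal{A}^2|\}\ge C q^{\frac r2}|\mathcal{A}|^{\frac12}$; (2) if $c_1 q^{r-\frac38}\le|\mathcal{A}|\le c_2 q^{r-\frac13}$, then $\max\{|\mathcal{A}+\mathcal{A}|, |\mathcal{A}^2+\mathcal{A}^2|\}\ge C\,\dfrac{|\mathcal{A}|^2}{q^{\frac{2r-1}{2}}}$; (3) if $|\mathcal{A}+\mathcal{A}|\,|\mathcal{A}|^2\ge c_1 q^{3r-1}$ and $|\mathcal{A}|\le c_2 q^{r-\frac38}$, then $\max\{|\mathcal{A}+\mathcal{A}|, |\mathcal{A}^2+\mathcal{A}^2|\}\ge C q^{r/3}|\mathcal{A}|^{2/3}$.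
   Context: A finite valuation ring is a finite, local, principal commutative ring with identity. Its unique maximal ideal is $(z)$ for a uniformizer $z$; the residue field $\mathcal{R}/(z)$ has $q$ elements; $r$ is the smallest positive integer with $z^r=0$; then $|\mathcal{R}|=q^r$ and $|(z)|=q^{r-1}$. For $\mathcal{A}\subset\mathcal{R}$: $\mathcal{A}+\mathcal{A}=\{a+b: a,b\in\mathcal{A}\}$, $\mathcal{A}^2=\{x^2: x\in\mathcal{A}\}$, and $\mathcal{A}^2+\mathcal{A}^2=\{u+v: u,v\in\mathcal{A}^2\}$. *)

(* Defs.v *)
From mathcomp Require Import all_boot all_algebra.
Set Implicit Arguments. Unset Strict Implicit. Unset Printing Implicit Defensive.
Import GRing.Theory.

Section FVR.
Variable R : finComNzRingType.
Local Open Scope ring_scope.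

(* An ideal: contains 0, closed under addition and under multiplication by
   ring elements (closure under negation follows with a = -1). *)
Definition is_ideal (I : {set R}) : Prop :=
  [/\ 0 \in I,
      (forall x y, x \in I -> y \in I -> x + y \in I) &
      (forall a x, x \in I -> a * x \in I)].

Definition principal_ideal (a : R) : {set R} := [set b * a | b : R].

Definition is_maximal_ideal (M : {set R}) : Prop :=
  [/\ is_ideal M, (1 \notin M) &
      (forall J : {set R}, is_ideal J -> 1 \notin J -> M \subset J -> J = M)].

Definition is_local_ring : Prop := exists! M : {set R}, is_maximal_ideal M.

Definition is_principal_ring : Prop :=
  forall I : {set R}, is_ideal I -> exists a : R, I = principal_ideal a.

(* finite valuation ring: finite (finType), commutative with identity
   (finComNzRingType), local and principal *)
Definition finite_valuation_ring : Prop := is_local_ring /\ is_principal_ring.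

Definition quotient_card (M : {set R}) : nat :=
  #|[set [set x + m | m in M] | x : R]|.

Definition sumset (A : {set R}) : {set R} := [set a + b | a in A, b in A].
Definition sqset (A : {set R}) : {set R} := [set x ^+ 2 | x in A].

Definition nilpotency_index (z : R) (r : nat) : Prop :=
  [/\ (0 < r)%N, z ^+ r = 0 & (forall k : nat, (0 < k < r)%N -> z ^+ k != 0)].

End FVR.

Definition odd_prime_power (q : nat) : Prop :=
  exists p k : nat, [/\ prime p, odd p, (0 < k)%N & q = expn p k].

Definition large_set (T : finType) (A : {set T}) (q r : nat) : Prop :=
  (muln 2 (expn q (subn r 1)) <= #|A|)%N.

(* Main.v *)
Require Import Defs.
From mathcomp Require Import all_boot all_algebra.
From Stdlib Require Import Reals.
From Stdlib Require Import Lra Lia Psatz.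

Open Scope R_scope.


Lemma pow_lt_n (u v : R) (n : nat) : 0 <= v -> v < u -> (0 < n)%coq_nat -> v ^ n < u ^ n.
Proof.
intros hv hvu hn. induction n as [|n IH]; [lia|].
destruct n as [|n]; [simpl; lra|].
change (v ^ S (S n)) with (v * v ^ S n); change (u ^ S (S n)) with (u * u ^ S n).
assert (h1 : v ^ S n < u ^ S n) by (apply IH; lia).
assert (h2 : 0 <= v ^ S n) by (apply pow_le; lra).
nra.
Qed.

Lemma le_root (u v : R) (n : nat) : 0 <= u -> 0 <= v -> (0 < n)%coq_nat ->
  u ^ n <= v ^ n -> u <= v.
Proof.
intros hu hv hn h. destruct (Rle_lt_dec u v) as [l|l]; [exact l|].
exfalso. pose proof (pow_lt_n u v n hv l hn). lra.
Qed.

Lemma rpow_n x y n : 0 < x -> (Rpower x y) ^ n = Rpower x (y * INR n).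
Proof.
intros hx. rewrite <- Rpower_pow; [|apply exp_pos]. now rewrite Rpower_mult.
Qed.

Lemma rpow_pos x y : 0 < Rpower x y.
Proof. apply exp_pos. Qed.

Lemma INR3 : INR 3 = 3. Proof. simpl; lra. Qed.
Lemma INR2 : INR 2 = 2. Proof. simpl; lra. Qed.
Lemma INR8 : INR 8 = 8. Proof. simpl; lra. Qed.

Section RealMain.
Variables c1 c2 : R.
Hypotheses (hc1 : 0 < c1) (hc2 : 0 < c2).
Definition d1 := Rmin 1 c1.
Definition e2 := Rmin 1 (/ c2).
Definition CC := d1 ^ 2 * e2 ^ 3 / 4.

Lemma d1_pos : 0 < d1. Proof. unfold d1, Rmin; destruct Rle_dec; lra. Qed.
Lemma d1_le1 : d1 <= 1. Proof. unfold d1, Rmin; destruct Rle_dec; lra. Qed.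
Lemma d1_le : d1 <= c1. Proof. unfold d1, Rmin; destruct Rle_dec; lra. Qed.
Lemma e2_pos : 0 < e2.
Proof. unfold e2, Rmin; destruct Rle_dec; [lra|]. apply Rinv_0_lt_compat; lra. Qed.
Lemma e2_le1 : e2 <= 1. Proof. unfold e2, Rmin; destruct Rle_dec; lra. Qed.
Lemma e2c2 : e2 * c2 <= 1.
Proof.
unfold e2, Rmin; destruct Rle_dec as [l|l].
- assert (1 <= / c2) by lra.
  assert (c2 <= 1). { apply Rnot_lt_le; intro hc. 
    assert (/ c2 < 1). { rewrite <- Rinv_1. apply Rinv_lt_contravar; lra. } lra. }
  lra.
- rewrite Rinv_l; lra.
Qed.

Lemma CC_pos : 0 < CC.
Proof. unfold CC. pose proof d1_pos. pose proof e2_pos. apply Rmult_lt_0_compat; [|lra].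
apply Rmult_lt_0_compat; apply pow_lt; lra. Qed.

Lemma pw01 x n : 0 <= x <= 1 -> 0 <= x ^ n <= 1.
Proof. intros h. split; [apply pow_le; lra|]. rewrite <- (pow1 n). apply pow_incr; lra. Qed.

Lemma CC_facts :
  CC <= 1/4 /\ 16 * CC ^ 2 <= c1 ^ 3 /\ 16 * (CC ^ 2 * c2 ^ 3) <= 1 /\
  CC ^ 3 * c2 ^ 8 <= c1 ^ 3.
Proof.
pose proof d1_pos; pose proof d1_le1; pose proof d1_le; pose proof e2_pos; pose proof e2_le1.
pose proof e2c2.
assert (hD3 : d1 ^ 3 <= c1 ^ 3) by (apply pow_incr; lra).
destruct (pw01 d1 2) as [a1 a2]; [lra|].
destruct (pw01 d1 3) as [a3 a4]; [lra|].
destruct (pw01 e2 3) as [b1 b2]; [lra|].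
assert (hec : 0 <= e2 * c2) by (apply Rmult_le_pos; lra).
destruct (pw01 (e2 * c2) 3) as [g1 g2]; [lra|].
destruct (pw01 (e2 * c2) 8) as [g3 g4]; [lra|].
unfold CC; repeat split.
- nra.
- replace (16 * (d1 ^ 2 * e2 ^ 3 / 4) ^ 2) with (d1 * d1 ^ 3 * (e2 ^ 3 * e2 ^ 3)) by (simpl; field).
  assert (0 <= e2 ^ 3 * e2 ^ 3 <= 1) by nra.
  assert (d1 * d1 ^ 3 <= d1 ^ 3) by nra.
  nra.
- replace (16 * ((d1 ^ 2 * e2 ^ 3 / 4) ^ 2 * c2 ^ 3)) with (d1 ^ 2 * d1 ^ 2 * e2 ^ 3 * (e2 * c2) ^ 3) by (simpl; field).
  assert (0 <= d1 ^ 2 * d1 ^ 2 <= 1) by nra.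
  assert (0 <= d1 ^ 2 * d1 ^ 2 * e2 ^ 3 <= 1) by nra.
  nra.
- replace ((d1 ^ 2 * e2 ^ 3 / 4) ^ 3 * c2 ^ 8) with (d1 ^ 3 * (d1 ^ 3 * e2 * (e2 * c2) ^ 8 / 64)) by (simpl; field).
  assert (0 <= d1 ^ 3 * e2 <= 1) by nra.
  assert (0 <= d1 ^ 3 * e2 * (e2 * c2) ^ 8 <= 1) by nra.
  nra.
Qed.

Lemma real_main (Q rr a s t : R) : 0 < Q -> 0 < a -> 0 <= s -> 0 <= t ->
  (Rpower Q rr * a <= 2 * (Rmax s t) ^ 2 \/
   a ^ 4 <= 16 * Rpower Q rr * Rpower Q (rr - 1) * (Rmax s t) ^ 2) ->
  (c1 * Rpower Q (rr - 1/3) <= a ->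
     CC * Rpower Q (rr / 2) * Rpower a (1/2) <= Rmax s t) /\
  (c1 * Rpower Q (rr - 3/8) <= a -> a <= c2 * Rpower Q (rr - 1/3) ->
     CC * (a ^ 2 / Rpower Q ((2 * rr - 1) / 2)) <= Rmax s t) /\
  (c1 * Rpower Q (3 * rr - 1) <= s * a ^ 2 -> a <= c2 * Rpower Q (rr - 3/8) ->
     CC * Rpower Q (rr / 3) * Rpower a (2/3) <= Rmax s t).
Proof.
intros hQ ha hs ht key.
set (m := Rmax s t) in *.
assert (hsm : s <= m) by apply Rmax_l.
assert (hm : 0 <= m) by lra.
set (X := Rpower Q rr) in *. set (Y := Rpower Q (rr - 1)) in *.
assert (hX : 0 < X) by apply rpow_pos. assert (hY : 0 < Y) by apply rpow_pos.
pose proof CC_pos as hC. destruct CC_facts as [f1 [f2 [f3 f4]]].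
assert (eXXY : Rpower Q (3 * rr - 1) = X * X * Y).
{ unfold X, Y. rewrite <- !Rpower_plus. f_equal. ring. }
repeat split.
-
  intros H.
  assert (H3 : c1 ^ 3 * (X * X * Y) <= a ^ 3).
  { assert (0 <= c1 * Rpower Q (rr - 1/3)) by (pose proof (rpow_pos Q (rr - 1/3)); nra).
    pose proof (pow_incr _ _ 3 (conj H0 H)) as h.
    rewrite Rpow_mult_distr rpow_n in h; auto. rewrite INR3 in h.
    replace ((rr - 1/3) * 3) with (3 * rr - 1) in h by field. rewrite eXXY in h. exact h. }
  apply (le_root _ _ 2); [pose proof (rpow_pos Q (rr/2)); pose proof (rpow_pos a (1/2)); 
     apply Rmult_le_pos; [apply Rmult_le_pos|]; lra | lra | lia |].
  replace ((CC * Rpower Q (rr / 2) * Rpower a (1 / 2)) ^ 2) with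
    (CC ^ 2 * (Rpower Q (rr / 2)) ^ 2 * (Rpower a (1 / 2)) ^ 2) by ring.
  rewrite !rpow_n; auto. rewrite INR2.
  replace (rr / 2 * 2) with rr by field. replace (1/2 * 2) with 1 by field.
  rewrite Rpower_1; auto. fold X.
  destruct key as [k|k].
  + assert (0 <= CC ^ 2 <= 1/16) by nra. assert (0 <= X * a) by nra.
    replace (CC ^ 2 * X * a) with (CC ^ 2 * (X * a)) by ring. nra.
  + assert (h16 : 16 * CC ^ 2 * X * a * (X * Y) <= 16 * X * Y * m ^ 2).
    { apply Rle_trans with (c1 ^ 3 * (X * X * Y) * a).
      - assert (0 <= X * a * (X * Y)) by (apply Rmult_le_pos; [nra|nra]). nra.
      - replace (a ^ 4) with (a ^ 3 * a) in k by ring. nra. }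
    apply Rmult_le_reg_r with (16 * X * Y); [nra|]. nra.
-
  intros _ H.
  assert (H3 : a ^ 3 <= c2 ^ 3 * (X * X * Y)).
  { pose proof (pow_incr _ _ 3 (conj (Rlt_le _ _ ha) H)) as h.
    rewrite Rpow_mult_distr rpow_n in h; auto. rewrite INR3 in h.
    replace ((rr - 1/3) * 3) with (3 * rr - 1) in h by field. rewrite eXXY in h. exact h. }
  assert (eR : (Rpower Q ((2 * rr - 1) / 2)) ^ 2 = X * Y).
  { rewrite rpow_n; auto. rewrite INR2. unfold X, Y. rewrite <- Rpower_plus. f_equal; field. }
  pose proof (rpow_pos Q ((2 * rr - 1) / 2)) as hR.
  apply (le_root _ _ 2); [apply Rmult_le_pos; [lra|]; apply Rmult_le_pos; [nra|];
     left; apply Rinv_0_lt_compat; lra | lra | lia |].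
  replace ((CC * (a ^ 2 / Rpower Q ((2 * rr - 1) / 2))) ^ 2) with
     (CC ^ 2 * a ^ 4 / (Rpower Q ((2 * rr - 1) / 2)) ^ 2) by (field; lra).
  rewrite eR. apply Rmult_le_reg_r with (X * Y); [nra|].
  unfold Rdiv. rewrite Rmult_assoc Rinv_l; [|nra]. rewrite Rmult_1_r.
  destruct key as [k|k].
  +
    assert (hc : CC ^ 2 * a ^ 4 <= CC ^ 2 * a * (c2 ^ 3 * (X * X * Y))).
    { replace (a ^ 4) with (a * a ^ 3) by ring.
      assert (0 <= CC ^ 2 * a) by nra. nra. }
    assert (hcc : CC ^ 2 * a * (c2 ^ 3 * (X * X * Y)) <= (X * a) * (X * Y) / 16).
    { replace (CC ^ 2 * a * (c2 ^ 3 * (X * X * Y))) with ((CC ^ 2 * c2 ^ 3) * ((X * a) * (X * Y))) by ring.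
      assert (0 <= (X * a) * (X * Y)) by (apply Rmult_le_pos; apply Rmult_le_pos; lra).
      apply Rle_trans with (1/16 * ((X * a) * (X * Y))); [apply Rmult_le_compat_r; lra | lra]. }
    assert (hc3 : (X * a) * (X * Y) <= 2 * m ^ 2 * (X * Y)) by nra.
    nra.
  + assert (0 <= CC ^ 2 <= 1/16) by nra. nra.
-
  intros H H'.
  assert (H8 : a ^ 8 <= c2 ^ 8 * (X ^ 5 * Y ^ 3)).
  { pose proof (pow_incr _ _ 8 (conj (Rlt_le _ _ ha) H')) as h.
    rewrite Rpow_mult_distr rpow_n in h; auto. rewrite INR8 in h.
    replace (X ^ 5 * Y ^ 3) with (Rpower Q ((rr - 3/8) * 8)); [exact h|].
    unfold X, Y. rewrite !rpow_n; auto. rewrite <- Rpower_plus. f_equal.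
    replace (INR 5) with 5 by (simpl; lra). rewrite INR3. field. }
  assert (H3 : c1 ^ 3 * (X ^ 6 * Y ^ 3) <= s ^ 3 * a ^ 6).
  { assert (0 <= c1 * Rpower Q (3 * rr - 1)) by (pose proof (rpow_pos Q (3 * rr - 1)); nra).
    pose proof (pow_incr _ _ 3 (conj H0 H)) as h. rewrite eXXY in h.
    replace ((c1 * (X * X * Y)) ^ 3) with (c1 ^ 3 * (X ^ 6 * Y ^ 3)) in h by ring.
    replace ((s * a ^ 2) ^ 3) with (s ^ 3 * a ^ 6) in h by ring. exact h. }
  pose proof (rpow_pos Q (rr/3)); pose proof (rpow_pos a (2/3)).
  apply (le_root _ _ 3); [apply Rmult_le_pos; [apply Rmult_le_pos|]; lra | lra | lia |].
  replace ((CC * Rpower Q (rr / 3) * Rpower a (2 / 3)) ^ 3) with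
    (CC ^ 3 * (Rpower Q (rr / 3)) ^ 3 * (Rpower a (2 / 3)) ^ 3) by ring.
  rewrite !rpow_n; auto. rewrite INR3.
  replace (rr / 3 * 3) with rr by field. replace (2/3 * 3) with (INR 2) by (rewrite INR2; field).
  rewrite Rpower_pow; auto. fold X.
  assert (hsm3 : s ^ 3 <= m ^ 3) by (apply pow_incr; lra).
  assert (ha6 : 0 < a ^ 6 * c2 ^ 8) by (apply Rmult_lt_0_compat; apply pow_lt; lra).
  apply Rle_trans with (s ^ 3); [|exact hsm3].
  apply Rmult_le_reg_r with (a ^ 6 * c2 ^ 8); [exact ha6|].
  assert (e1 : CC ^ 3 * X * a ^ 2 * (a ^ 6 * c2 ^ 8) = (CC ^ 3 * c2 ^ 8) * (X * a ^ 8)) by ring.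
  rewrite e1.
  assert (hXa : 0 <= X * a ^ 8) by (apply Rmult_le_pos; [lra|apply pow_le; lra]).
  apply Rle_trans with (c1 ^ 3 * (X * a ^ 8)); [nra|].
  apply Rle_trans with (c1 ^ 3 * (X * (c2 ^ 8 * (X ^ 5 * Y ^ 3)))).
  { assert (0 <= c1 ^ 3) by (apply pow_le; lra). apply Rmult_le_compat_l; [auto|]. nra. }
  replace (c1 ^ 3 * (X * (c2 ^ 8 * (X ^ 5 * Y ^ 3)))) with (c2 ^ 8 * (c1 ^ 3 * (X ^ 6 * Y ^ 3))) by ring.
  replace (s ^ 3 * (a ^ 6 * c2 ^ 8)) with (c2 ^ 8 * (s ^ 3 * a ^ 6)) by ring.
  apply Rmult_le_compat_l; [apply pow_le; lra|exact H3].
Qed.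

End RealMain.

Lemma INR_muln m n : INR (muln m n) = INR m * INR n.
Proof. apply mult_INR. Qed.

Lemma INR_expn m n : INR (expn m n) = INR m ^ n.
Proof. induction n as [|n IH]; [reflexivity|]. rewrite expnS INR_muln IH. simpl. ring. Qed.

Lemma INR_leq m n : (m <= n)%nat -> INR m <= INR n.
Proof. intros h; apply le_INR; apply/leP; exact h. Qed.

Lemma INR_maxn m n : INR (maxn m n) = Rmax (INR m) (INR n).
Proof.
case: (leqP m n) => h.
- rewrite Rmax_right //; apply INR_leq; exact h.
- rewrite Rmax_left //; apply INR_leq; apply ltnW; exact h.
Qed.

Lemma conv1 N a m : (N * a <= 2 * expn m 2)%nat -> INR N * INR a <= 2 * INR m ^ 2.
Proof.
intros h. apply INR_leq in h. rewrite INR_muln in h.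
replace (2 * INR m ^ 2) with (INR (muln 2 (expn m 2))); [exact h|].
rewrite (INR_muln 2) INR_expn. simpl. ring.
Qed.

Lemma conv2 N K a m : (expn a 4 <= 16 * N * K * expn m 2)%nat ->
  INR a ^ 4 <= 16 * INR N * INR K * INR m ^ 2.
Proof.
intros h. apply INR_leq in h.
replace (INR a ^ 4) with (INR (expn a 4)) by apply INR_expn.
replace (16 * INR N * INR K * INR m ^ 2) with (INR (muln (muln (muln 16 N) K) (expn m 2))); [exact h|].
rewrite (INR_muln (muln (muln 16 N) K)) (INR_muln (muln 16 N)) (INR_muln 16) INR_expn. replace (INR 16) with 16 by (simpl; lra). reflexivity.
Qed.

From mathcomp Require Import all_fingroup all_solvable.
From mathcomp Require Import ring zify.
Set Implicit Arguments. Unset Strict Implicit. Unset Printing Implicit Defensive.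
Import ssrnat ssralg.
Import GRing.Theory.

Section RingFacts.
Local Open Scope ring_scope.
Variable R : finComNzRingType.

Lemma pidP (z x : R) : reflect (exists b, x = b * z) (x \in principal_ideal z).
Proof.
apply: (iffP imsetP) => [[b _ ->]|[b ->]]; by exists b.
Qed.

Lemma pid0 (z : R) : 0 \in principal_ideal z.
Proof. by apply/pidP; exists 0; rewrite mul0r. Qed.

Lemma pidD (z x y : R) : x \in principal_ideal z -> y \in principal_ideal z ->
  x + y \in principal_ideal z.
Proof.
by move=> /pidP[b ->] /pidP[c ->]; apply/pidP; exists (b + c); rewrite mulrDl.
Qed.

Lemma pidN (z x : R) : x \in principal_ideal z -> - x \in principal_ideal z.
Proof. by move=> /pidP[b ->]; apply/pidP; exists (- b); rewrite mulNr. Qed.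

Lemma pidM (z a x : R) : x \in principal_ideal z -> a * x \in principal_ideal z.
Proof. by move=> /pidP[b ->]; apply/pidP; exists (a * b); rewrite mulrA. Qed.

Lemma pidB (z x y : R) : x \in principal_ideal z -> y \in principal_ideal z ->
  x - y \in principal_ideal z.
Proof. by move=> hx hy; apply: pidD => //; apply: pidN. Qed.

Lemma nil_inv (u : R) n : u ^+ n = 0 -> exists g, (1 - u) * g = 1.
Proof.
move=> un; exists (\sum_(i < n) 1 ^+ (n.-1 - i) * u ^+ i).
by rewrite -subrXX un expr1n subr0.
Qed.

Lemma units_out (z : R) r : is_maximal_ideal (principal_ideal z) ->
  nilpotency_index z r ->
  forall x, x \notin principal_ideal z -> exists b, b * x = 1.
Proof.
move=> [_ _ Mmax] [r0 zr _] x xM.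
set M := principal_ideal z in Mmax xM *.
pose J := [set y | [exists m, [exists b, (m \in M) && (y == m + b * x)]]].
have JP y : reflect (exists m b, m \in M /\ y = m + b * x) (y \in J).
  rewrite inE; apply: (iffP existsP) => [[m /existsP[b /andP[mM /eqP->]]]|[m [b [mM ->]]]].
    by exists m, b.
  by exists m; apply/existsP; exists b; rewrite mM eqxx.
have Jid : is_ideal J.
  split.
  - by apply/JP; exists 0, 0; rewrite pid0 mul0r addr0.
  - move=> y1 y2 /JP[m1 [b1 [m1M ->]]] /JP[m2 [b2 [m2M ->]]].
    apply/JP; exists (m1 + m2), (b1 + b2); split; first exact: pidD.
    by ring.
  - move=> a y /JP[m [b [mM ->]]]; apply/JP; exists (a * m), (a * b); split.
      exact: pidM.
    by ring.
have MJ : M \subset J.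
  by apply/subsetP => m mM; apply/JP; exists m, 0; rewrite mul0r addr0.
case: (boolP (1 \in J)) => [/JP[m [b [/pidP[c ->] e1]]]|n1J].
  have [g hg] : exists g, (1 - c * z) * g = 1.
    by apply: (@nil_inv _ r); rewrite exprMn zr mulr0.
  exists (g * b); rewrite -hg -mulrA.
  have -> : b * x = 1 - c * z by rewrite e1; ring.
  by ring.
have JM := Mmax J Jid n1J MJ.
case/negP: xM; rewrite -JM; apply/JP; exists 0, 1; rewrite pid0 mul1r add0r.
by [].
Qed.

Definition cst (H : {set R}) (x : R) := [set x + h | h in H].

Lemma coset_eq (z x y : R) :
  (cst (principal_ideal z) y == cst (principal_ideal z) x) =
  (y - x \in principal_ideal z).
Proof.
set H := principal_ideal z.
apply/eqP/idP => [e|d].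
  have : y \in cst H x by rewrite -e; apply/imsetP; exists 0; rewrite ?pid0 ?addr0.
  by case/imsetP => h hH ->; rewrite addrC addKr.
apply/setP => w; apply/imsetP/imsetP => [[h hH ->]|[h hH ->]].
  by exists (y - x + h); [exact: pidD | ring].
by exists (h - (y - x)); [exact: pidB | ring].
Qed.

Lemma fiber_count (X Y : finType) (g : X -> Y) (A : {set X}) k :
  (forall x, x \in A -> #|[set y in A | g y == g x]| = k) ->
  #|A| = (#|g @: A| * k)%nat.
Proof.
move=> hk; rewrite -sum1_card (partition_big_imset g) /=.
rewrite -sum_nat_const; apply: eq_bigr => c /imsetP[x xA ->].
by rewrite sum1_card -(hk x xA); apply: eq_card => y; rewrite inE.
Qed.

End RingFacts.

Section Cards.
Local Open Scope ring_scope.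
Variable R : finComNzRingType.
Variables (z : R) (r : nat).
Hypothesis Mmax : is_maximal_ideal (principal_ideal z).
Hypothesis Hnil : nilpotency_index z r.
Local Notation M := (principal_ideal z).
Local Notation q := (quotient_card M).
Local Notation Mk k := (principal_ideal (z ^+ k)).

Lemma zk_neq0 k : (k < r)%nat -> z ^+ k != 0.
Proof.
case: Hnil => r0 _ hk; case: k => [|k] kr; first by rewrite expr0 oner_neq0.
by apply: hk; rewrite kr.
Qed.

Lemma val_step k : (k < r)%nat -> forall d,
  (d * z ^+ k \in Mk k.+1) = (d \in M).
Proof.
move=> kr d; apply/idP/idP => [/pidP[c e]|/pidP[c ->]]; last first.
  by apply/pidP; exists c; rewrite exprS; ring.
case: (boolP (d \in M)) => // dM.
have [u ed] := units_out Mmax Hnil dM.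
case: Hnil => _ zr _.
have [g hg] : exists g, (1 - u * c * z) * g = 1.
  by apply: (@nil_inv _ _ r); rewrite exprMn zr mulr0.
have : z ^+ k * (1 - u * c * z) = 0.
  have h : z ^+ k = u * c * z ^+ k.+1 by rewrite -mulrA -e mulrA ed mul1r.
  rewrite mulrBr mulr1 {1}h exprS; ring.
move=> h0; move: (zk_neq0 kr); rewrite -[z ^+ k]mulr1 -hg mulrA h0 mul0r.
by rewrite eqxx.
Qed.

Lemma Msub k : Mk k.+1 \subset Mk k.
Proof.
apply/subsetP => x /pidP[b ->]; apply/pidP; exists (b * z).
by rewrite exprS; ring.
Qed.

Lemma card_R_M : #|R| = (q * #|M|)%nat.
Proof.
rewrite -cardsT (fiber_count (g := cst M) (A := [set: R]) (k := #|M|)).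
  congr (_ * _)%nat; rewrite /quotient_card; apply: eq_card => c.
  by apply/imsetP/imsetP => -[x _ ->]; exists x.
move=> x _; rewrite -(card_preimset M (can_inj (subrK x))).
by apply: eq_card => w; rewrite !inE coset_eq.
Qed.

Lemma card_step k : (k < r)%nat -> #|Mk k| = (q * #|Mk k.+1|)%nat.
Proof.
move=> kr.
rewrite (fiber_count (g := cst (Mk k.+1)) (A := Mk k) (k := #|Mk k.+1|)); last first.
  move=> y yG; rewrite -(card_preimset (Mk k.+1) (can_inj (subrK y))).
  apply: eq_card => w; rewrite !inE coset_eq; apply/andP/idP => [[]//|h].
  split=> //; have -> : w = (w - y) + y by rewrite subrK.
  by apply: pidD => //; apply: (subsetP (Msub k)).
congr (_ * _)%nat.
pose g' := fun b => cst (Mk k.+1) (b * z ^+ k).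
have e1 : cst (Mk k.+1) @: Mk k = g' @: [set: R].
  apply/setP => c; apply/imsetP/imsetP => [[y /pidP[b ->] ->]|[b _ ->]].
    by exists b.
  by exists (b * z ^+ k) => //; apply/pidP; exists b.
have h1 := card_R_M.
have h2 : #|R| = (#|g' @: [set: R]| * #|M|)%nat.
  rewrite -cardsT (fiber_count (g := g') (k := #|M|)) //.
  move=> x _; rewrite -(card_preimset M (can_inj (subrK x))).
  apply: eq_card => w; rewrite !inE /g' coset_eq -mulrBl.
  by rewrite val_step.
have M0 : (0 < #|M|)%nat by apply/card_gt0P; exists 0; apply: pid0.
rewrite e1; apply/eqP; rewrite -(eqn_pmul2r M0) -h2 h1 //.
Qed.

Lemma card_Mk j : (j <= r)%nat -> #|Mk (r - j)| = (q ^ j)%nat.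
Proof.
elim: j => [|j IH] jr.
  rewrite subn0; case: Hnil => _ -> _.
  rewrite expn0 -(cards1 (0 : R)); apply: eq_card => x; rewrite inE.
  by apply/pidP/eqP => [[b ->]|->]; [rewrite mulr0 | exists 0; rewrite mulr0].
have kr : (r - j.+1 < r)%nat by case: Hnil => r0 _ _; rewrite ltn_subrL r0.
rewrite card_step // expnS -IH ?(ltnW jr) //.
by rewrite -subSn // subSS.
Qed.

Lemma card_M : #|M| = (q ^ r.-1)%nat.
Proof.
case: Hnil => r0 _ _.
rewrite -card_Mk ?leq_pred //.
by rewrite -subn1 subKn // expr1.
Qed.

Lemma card_R : #|R| = (q ^ r)%nat.
Proof.
rewrite -(card_Mk (leqnn r)) subnn expr0 -cardsT; apply: eq_card => x.
by rewrite inE; symmetry; apply/pidP; exists x; rewrite mulr1.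
Qed.

End Cards.
Section Two.
Local Open Scope ring_scope.

Lemma mulrn_card (R : finComNzRingType) (w : R) : w *+ #|R| = 0.
Proof.
rewrite -FinRing.zmodXgE -FinRing.zmod1gE -cardsT.
by apply: (@expg_cardG _ [set: R]%G); rewrite inE.
Qed.

Lemma two_half (R : finComNzRingType) : odd #|R| -> exists h : R, h + h = 1.
Proof.
move=> oR.
have inj : injective (fun x : R => x + x).
  move=> x y /= e; apply/eqP; rewrite -subr_eq0; apply/eqP.
  set w := x - y.
  have w2 : w + w = 0 by rewrite /w; rewrite -[RHS](subrr (x + x)) {2}e; ring.
  have := mulrn_card w; rewrite -(odd_double_half #|R|) oR add1n mulrSr.
  by rewrite -mul2n mulrnA mulr2n w2 mul0rn add0r.
have [g _ gK] := injF_bij inj.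
by exists (g 1); apply: gK.
Qed.

End Two.

Section Core.
Local Open Scope ring_scope.
Variable R : finComNzRingType.
Variable z : R.
Local Notation M := (principal_ideal z).
Hypothesis Hu : forall x, x \notin M -> exists b, b * x = 1.
Variable h : R.
Hypothesis Hh : h + h = 1.
Variable A : {set R}.
Hypothesis HA : (2 * #|M| <= #|A|)%nat.

Definition SS := sumset A.
Definition TT := sumset (sqset A).
Definition PP := [set p : R * R | (p.1 \in SS) && (p.2 + p.1 ^+ 2 \in TT)].
Definition onl (p l : R * R) : bool := p.2 == l.1 * p.1 + l.2.
Definition deg l := #|[set p in PP | onl p l]|.
Definition Ap := A :\: M.
Definition DD := setX A Ap.
Definition phl (i : R * R) : R * R := (- (i.1 + i.1), i.1 ^+ 2 + i.2 ^+ 2).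

Lemma cardP : (#|PP| <= #|SS| * #|TT|)%nat.
Proof.
rewrite -cardsX.
apply: leq_trans (leq_imset_card (fun st : R * R => (st.1, st.2 - st.1 ^+ 2)) _).
apply: subset_leq_card; apply/subsetP => -[s e]; rewrite inE /= => /andP[sS tT].
by apply/imsetP; exists (s, e + s ^+ 2); rewrite ?inE ?sS ?tT //= addrK.
Qed.

Lemma cardAp : (#|A| <= 2 * #|Ap|)%nat.
Proof.
have := cardsID M A; have : (#|A :&: M| <= #|M|)%nat by apply/subset_leq_card/subsetIr.
rewrite /Ap; lia.
Qed.

Lemma sumsetP (B : {set R}) x y : x \in B -> y \in B -> x + y \in sumset B.
Proof. by move=> xB yB; apply/imset2P; exists x y. Qed.

Lemma sqP (B : {set R}) x : x \in B -> x ^+ 2 \in sqset B.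
Proof. by move=> xB; apply/imsetP; exists x. Qed.

Lemma degA y w : y \in A -> w \in Ap -> (#|A| <= deg (phl (y, w)))%nat.
Proof.
move=> yA wAp; have wA : w \in A by move: wAp; rewrite inE => /andP[].
pose g := fun x : R => (x + y, x ^+ 2 + w ^+ 2 - (x + y) ^+ 2).
rewrite -(@card_in_imset _ _ g A); last first.
  by move=> x1 x2 _ _ [] /addIr.
apply: subset_leq_card; apply/subsetP => p /imsetP[x xA ->].
rewrite !inE /= /onl /= /SS /TT subrK sumsetP ?sqP //=.
rewrite sumsetP ?sqP //=; apply/eqP; ring.
Qed.

Lemma sq_fiber z1 z2 : z1 \notin M -> z2 \notin M -> z1 ^+ 2 = z2 ^+ 2 ->
  z2 = z1 \/ z2 = - z1.
Proof.
move=> z1M z2M e.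
have e0 : (z1 - z2) * (z1 + z2) = 0 by rewrite -[RHS](subrr (z1 ^+ 2)) {2}e; ring.
case: (boolP (z1 - z2 \in M)) => d1.
  case: (boolP (z1 + z2 \in M)) => d2.
    case/negP: z1M; have -> : z1 = h * ((z1 - z2) + (z1 + z2)).
      by rewrite -[LHS]mul1r -Hh; ring.
    by apply: pidM; apply: pidD.
  have [b hb] := Hu d2; left.
  have : z1 - z2 = 0 by rewrite -[z1 - z2]mulr1 -hb mulrCA e0 mulr0.
  by move/eqP; rewrite subr_eq0 => /eqP.
have [b hb] := Hu d1; right.
have : z1 + z2 = 0 by rewrite -[z1 + z2]mul1r -hb -mulrA e0 mulr0.
by move=> h0; apply/eqP; rewrite -(subr_eq0 z2) opprK addrC h0.
Qed.

Lemma fiber2 l : (#|[set i in DD | phl i == l]| <= 2)%nat.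
Proof.
case: (set_0Vmem [set i in DD | phl i == l]) => [->|[i0]]; first by rewrite cards0.
rewrite inE => /andP[i0D /eqP pl].
apply: leq_trans (_ : #|[set i0; (i0.1, - i0.2)]| <= 2)%nat; last by rewrite cards2 ltnS leq_b1.
apply: subset_leq_card; apply/subsetP => i; rewrite !inE => /andP[iD /eqP e].
rewrite -pl in e; case: i iD e => y w; case: i0 i0D pl => y0 w0.
rewrite !inE /= => /andP[y0A w0Ap] _ /andP[yA wAp] [e1 e2].
have ey : y = y0.
  by rewrite -[y]mul1r -[y0]mul1r -Hh !mulrDl -!mulrDr -(opprK (y + y)) e1 opprK.
subst y0; move: e2 => /addrI e2.
have nM : forall v, (v \notin M) && (v \in A) -> v \notin M by move=> v /andP[].
case: (sq_fiber (nM _ w0Ap) (nM _ wAp) (esym e2)) => ->; by rewrite eqxx ?orbT.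
Qed.

Lemma sum_fiber (hh : R * R -> nat) :
  (\sum_(i in DD) hh (phl i) <= 2 * \sum_l hh l)%nat.
Proof.
rewrite (partition_big phl predT) //= big_distrr /=; apply: leq_sum => l _.
rewrite (eq_bigr (fun _ => hh l)); last by move=> i /andP[_ /eqP->].
rewrite sum_nat_const; apply: leq_mul => //.
by apply: leq_trans (fiber2 l); rewrite leq_eqVlt; apply/orP; left; apply/eqP/eq_card => i; rewrite inE.
Qed.


Lemma f_sum l : deg l = (\sum_(p in PP) (onl p l : nat))%nat.
Proof.
rewrite /deg -sum1_card [LHS]big_mkcond [RHS]big_mkcond /=.
by apply: eq_bigr => p _; rewrite inE; case: (p \in PP); case: (onl p l).
Qed.

Lemma sum_eq1 (c : R) (F : R -> bool) : (forall w, F w = (w == c)) ->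
  (\sum_w (F w : nat) = 1)%nat.
Proof.
move=> hF; rewrite (bigD1 c) //= hF eqxx big1 // => w /negbTE wc.
by rewrite hF wc.
Qed.

Lemma lines_through p : (\sum_l (onl p l : nat) = #|R|)%nat.
Proof.
rewrite -(pair_big predT predT (fun m w => (onl p (m, w) : nat))) /=.
rewrite -sum1_card; apply: eq_bigr => m _.
apply: (sum_eq1 (c := p.2 - m * p.1)) => w.
by rewrite /onl /=; apply/eqP/eqP => [->|->]; ring.
Qed.

Lemma sum_f : (\sum_l deg l = #|PP| * #|R|)%nat.
Proof.
rewrite (eq_bigr _ (fun l _ => f_sum l)) exchange_big /=.
by rewrite (eq_bigr _ (fun p _ => lines_through p)) sum_nat_const.
Qed.

Lemma c_le1 p1 p2 : p2.1 - p1.1 \notin M ->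
  (\sum_l (onl p1 l && onl p2 l : nat) <= 1)%nat.
Proof.
move=> dM; have [b hb] := Hu dM.
have -> : (\sum_l (onl p1 l && onl p2 l : nat) =
           \sum_l (if onl p1 l && onl p2 l then 1 else 0))%nat.
  by apply: eq_bigr => l _; case: (onl p1 l && onl p2 l).
rewrite -big_mkcond sum1_card; apply/card_le1_eqP => l l'.
rewrite /onl => /andP[/eqP e1 /eqP e2] /andP[/eqP e1' /eqP e2'].
have em : l.1 = l'.1.
  have : (l.1 - l'.1) * (p2.1 - p1.1) = 0.
    have : l.1 * (p2.1 - p1.1) = p2.2 - p1.2 by rewrite e1 e2; ring.
    have : l'.1 * (p2.1 - p1.1) = p2.2 - p1.2 by rewrite e1' e2'; ring.
    by move=> ha hb'; rewrite mulrBl ha hb' subrr.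
  move=> h0; apply/eqP; rewrite -subr_eq0; apply/eqP.
  by rewrite -[_ - _]mulr1 -hb mulrCA h0 mulr0.
have ew : l.2 = l'.2.
  by rewrite -[l.2](addKr (l.1 * p1.1)) -e1 em e1' addKr.
by case: l l' em ew {e1 e2 e1' e2'} => m w [m' w'] /= -> ->.
Qed.

Lemma vert p1 s2 : (\sum_e2 \sum_l (onl p1 l && onl (s2, e2) l : nat) = #|R|)%nat.
Proof.
rewrite exchange_big /= -(lines_through p1); apply: eq_bigr => l _.
case: (onl p1 l) => /=; last by rewrite big1.
by apply: (sum_eq1 (c := l.1 * s2 + l.2)) => e2.
Qed.

Lemma sum_f2 : (\sum_l deg l ^ 2 <= #|PP| ^ 2 + #|PP| * #|M| * #|R|)%nat.
Proof.
have -> : (\sum_l deg l ^ 2 =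
   \sum_(p1 in PP) \sum_(p2 in PP) \sum_l (onl p1 l && onl p2 l : nat))%nat.
  rewrite (eq_bigr (fun l => \sum_(p1 in PP) \sum_(p2 in PP) (onl p1 l && onl p2 l : nat))).
    by rewrite exchange_big /=; apply: eq_bigr => p1 _; rewrite exchange_big.
  move=> l _; rewrite f_sum expnS expn1 big_distrl /=; apply: eq_bigr => p1 _.
  rewrite big_distrr /=; apply: eq_bigr => p2 _.
  by case: (onl p1 l); case: (onl p2 l).
rewrite expnS expn1 -mulnA -mulnDr -sum_nat_const; apply: leq_sum => p1 _.
rewrite (bigID (fun p2 : R * R => p2.1 - p1.1 \in M)) /= addnC.
apply: leq_add.
  rewrite -sum1_card [X in (_ <= X)%nat]big_mkcond [X in (X <= _)%nat]big_mkcond /=.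
  apply: leq_sum => p2 _; case: (p2 \in PP) => //=.
  case: (boolP (p2.1 - p1.1 \in M)) => //= dM.
  exact: c_le1.
apply: (@leq_trans (\sum_(p2 | (p2.1 - p1.1)%R \in M) \sum_l (onl p1 l && onl p2 l : nat))%nat).
  rewrite [X in (_ <= X)%nat]big_mkcond [X in (X <= _)%nat]big_mkcond /=.
  apply: leq_sum => p2 _; by case: (p2 \in PP); case: ((p2.1 - p1.1)%R \in M).
rewrite big_mkcond /=.
rewrite -(pair_big predT predT (fun s2 e2 => if (s2 - p1.1 \in M) then
     \sum_l (onl p1 l && onl (s2, e2) l : nat) else 0%nat)) /=.
have -> : (\sum_s2 \sum_e2 (if (s2 - p1.1)%R \in M then
           \sum_l (onl p1 l && onl (s2, e2) l : nat) else 0) =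
         \sum_s2 (if (s2 - p1.1)%R \in M then #|R| else 0))%nat.
  apply: eq_bigr => s2 _; case: ((s2 - p1.1)%R \in M); last by rewrite big1.
  exact: vert.
rewrite -big_mkcond sum_nat_const /=.
have -> : #|[pred s2 | s2 - p1.1 \in M]| = #|M|.
  rewrite -(card_preimset M (can_inj (subrK p1.1))).
  by apply: eq_card => w; rewrite !inE.
by [].
Qed.

Lemma sq_id (x y : nat) : ((x - y) * (x - y) + (y - x) * (y - x) + 2 * x * y = x * x + y * y)%nat.
Proof.
case: (leqP x y) => hxy.
  have -> : (x - y = 0)%nat by apply/eqP; rewrite subn_eq0.
  have [d ->] : exists d, y = (x + d)%nat by exists (y - x)%nat; rewrite subnKC.
  rewrite addKn; ring.
have -> : (y - x = 0)%nat by apply/eqP; rewrite subn_eq0 ltnW.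
have [d ->] : exists d, x = (y + d)%nat by exists (x - y)%nat; rewrite subnKC // ltnW.
rewrite addKn; ring.
Qed.

Lemma key : let N := #|R| in let K := #|M| in let a := #|A| in
  let m := maxn #|SS| #|TT| in
  (N * a <= 2 * m ^ 2)%nat \/ (a ^ 4 <= 16 * N * K * m ^ 2)%nat.
Proof.
move=> N K a m; set Pn := #|PP|.
have Pm : (Pn <= m ^ 2)%nat.
  by apply: leq_trans cardP _; rewrite expnS expn1 leq_mul // ?leq_maxl ?leq_maxr.
have N0 : (0 < N)%nat by apply/card_gt0P; exists 0.
case: (leqP (2 * Pn) (N * a)) => [big|small]; last first.
  by left; apply: leq_trans (ltnW small) _; rewrite leq_mul2l.
right.
pose hf l := ((N * deg l - Pn) * (N * deg l - Pn) + (Pn - N * deg l) * (Pn - N * deg l))%nat.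
have sumhf : (\sum_l hf l <= N * N * N * Pn * K)%nat.
  have e : (\sum_l hf l + 2 * N * Pn * \sum_l deg l =
            N * N * \sum_l deg l ^ 2 + N * N * (Pn * Pn))%nat.
    rewrite !big_distrr /= -big_split /=.
    have -> : (N * N * (Pn * Pn) = \sum_(l : R * R) Pn * Pn)%nat.
      by rewrite sum_nat_const card_prod mulnC.
    rewrite -big_split /=; apply: eq_bigr => l _.
    rewrite /hf (_ : 2 * N * Pn * deg l = 2 * (N * deg l) * Pn)%nat; last ring.
    by rewrite sq_id; ring.
  move: e; rewrite sum_f => e.
  have := sum_f2; rewrite -/Pn -/K -/N => h2.
  have : (N * N * \sum_l deg l ^ 2 <= N * N * (Pn ^ 2 + Pn * K * N))%nat.
    by rewrite leq_mul2l h2 orbT.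
  rewrite (_ : 2 * N * Pn * (Pn * N) = N * N * (Pn * Pn) + N * N * (Pn * Pn))%nat in e; last ring.
  rewrite (_ : N * N * (Pn ^ 2 + Pn * K * N) = N * N * (Pn * Pn) + N * N * N * Pn * K)%nat; last ring.
  move: e; move: (N * N * (Pn * Pn))%nat (N * N * N * Pn * K)%nat (N * N * \sum_l deg l ^ 2)%nat (\sum_l hf l).
  move=> Y W Z H e h3; lia.
set X := (N * a - Pn)%nat.
have HX : (N * a <= 2 * X)%nat by rewrite /X; lia.
have lowD : (#|DD| * (X * X) <= 2 * (N * N * N * Pn * K))%nat.
  apply: leq_trans (leq_mul (leqnn 2) sumhf).
  apply: leq_trans (sum_fiber hf).
  rewrite -sum_nat_const; apply: leq_sum => -[y w]; rewrite inE /= => /andP[yA wAp].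
  have := degA yA wAp; rewrite -/a => hd.
  have : (X <= N * deg (phl (y, w)) - Pn)%nat.
    by rewrite /X leq_sub2r // leq_mul2l hd orbT.
  move=> hX; apply: leq_trans (leq_addr _ _); exact: leq_mul.
have HD : #|DD| = (a * #|Ap|)%nat by rewrite /DD cardsX.
have hAp := cardAp; rewrite -/a in hAp.
have : (N * N * a ^ 4 <= N * N * (16 * N * K * m ^ 2))%nat.
  apply: (@leq_trans (a * (2 * #|Ap|) * ((2 * X) * (2 * X)))%nat).
    have -> : (N * N * a ^ 4 = a * a * ((N * a) * (N * a)))%nat by ring.
    by apply: leq_mul; [apply: leq_mul | apply: leq_mul].
  apply: (@leq_trans (8 * (#|DD| * (X * X)))%nat).
    by rewrite HD; apply: eq_leq; ring.
  apply: (@leq_trans (8 * (2 * (N * N * N * m ^ 2 * K))))%nat.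
    rewrite leq_mul2l /=; apply: leq_trans lowD _.
    by rewrite leq_mul2l /= leq_mul2r leq_mul2l Pm !orbT.
  by apply: eq_leq; ring.
by rewrite leq_pmul2l // muln_gt0 N0.
Qed.

End Core.

Lemma INR16 : INR 16 = 16. Proof. simpl; lra. Qed.
Lemma INR2' : INR 2 = 2. Proof. simpl; lra. Qed.

Theorem corollary1p6 :
  forall c1 c2 : R, 0 < c1 -> 0 < c2 ->
  exists C : R, 0 < C /\
  forall (Rg : finComNzRingType) (z : Rg) (q r : nat),
    finite_valuation_ring Rg ->
    is_maximal_ideal (principal_ideal z) ->
    (* r is the smallest positive integer with z^r = 0 *)
    nilpotency_index z r ->
    (* q = |R/(z)| is a power of an odd prime *)
    q = quotient_card (principal_ideal z) ->
    odd_prime_power q ->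
    forall A : {set Rg},
      large_set A q r ->
      let a := INR #|A| in
      let s := INR #|sumset A| in
      let t := INR #|sumset (sqset A)| in
      let Q := INR q in
      let rr := INR r in
      (c1 * Rpower Q (rr - 1/3) <= a ->
         C * Rpower Q (rr / 2) * Rpower a (1/2) <= Rmax s t) /\
      (c1 * Rpower Q (rr - 3/8) <= a -> a <= c2 * Rpower Q (rr - 1/3) ->
         C * (a ^ 2 / Rpower Q ((2 * rr - 1) / 2)) <= Rmax s t) /\
      (c1 * Rpower Q (3 * rr - 1) <= s * a ^ 2 -> a <= c2 * Rpower Q (rr - 3/8) ->
         C * Rpower Q (rr / 3) * Rpower a (2/3) <= Rmax s t).
Proof.
intros c1 c2 hc1 hc2.
exists (CC c1 c2). split; [apply CC_pos; auto|].
intros Rg z q r Hfvr Hmax Hnil Hq Hodd A HA a s t Q rr.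
have hM : #|principal_ideal z| = (q ^ r.-1)%nat by rewrite Hq; exact: (card_M Hmax Hnil).
have hR : #|Rg| = (q ^ r)%nat by rewrite Hq; exact: (card_R Hmax Hnil).
have [oq q0] : odd q /\ (0 < q)%nat.
  case: Hodd => p [k [pp op k0 qe]].
  by rewrite qe oddX op orbT expn_gt0 prime_gt0.
have r0 : (0 < r)%nat by case: Hnil.
have oddR : odd #|Rg| by rewrite hR oddX oq orbT.
have [h Hh] := two_half oddR.
have Hu := units_out Hmax Hnil.
have HA' : (2 * #|principal_ideal z| <= #|A|)%nat.
  by rewrite hM -subn1; exact: HA.
have a0 : (0 < #|A|)%nat.
  by apply: leq_trans HA'; rewrite muln_gt0 /=; apply/card_gt0P; exists 0%R; apply: pid0.
have K := key Hu Hh HA'.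
cbv zeta in K.
have hQ : 0 < Q by apply lt_0_INR; apply/ltP.
have ha : 0 < a by apply lt_0_INR; apply/ltP.
apply: (real_main c1 c2 hc1 hc2 Q rr a s t hQ ha (pos_INR _) (pos_INR _)).
have eX : Rpower Q rr = INR #|Rg| by rewrite Rpower_pow // hR INR_expn.
have eY : Rpower Q (rr - 1) = INR #|principal_ideal z|.
  rewrite /rr (_ : INR r - 1 = INR (r - 1)); last first.
    by rewrite minus_INR //; apply/leP.
  by rewrite Rpower_pow // hM -subn1 INR_expn.
have em : Rmax s t = INR (maxn #|SS A| #|TT A|) by rewrite INR_maxn.
rewrite eX eY em.
case: K => [k|k]; [left|right].
- exact: conv1.
- exact: conv2.
Qed.
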